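(* Let $U$ be a finite nonempty set, $R$ an equivalence relation on $U$, and $M(R)$ the support matroid induced by $R$. Then the family of closed sets of $M(R)$ is $$\mathbf{L}(R)=\Big\{X\subseteq U : \bigcup_{x\in X} RN(x)=X\Big\}.$$
   Context: For $x\in U$, $RN(x)=\{y\in U\mid xRy\}$; $R^{*}(X)=\{x\in U\mid RN(x)\cap X\neq\emptyset\}$. Let $\mathbf{S}(R)=\{X\subseteq U\mid R^{*}(X)=U\}$. The support matroid $M(R)=(U,\mathbf{I}(R))$ is the matroid on $U$ whose independent sets $\mathbf{I}(R)$ are the subsets of inclusion-minimal members of $\mathbf{S}(R)$. For a matroid $(U,\mathbf{I})$, the rank is $r(X)=\max\{|I|\mid I\subseteq X, I\in\mathbf{I}\}$, the closure is $cl(X)=\{e\in U\mid r(X)=r(X\cup\{e\})\}$, and $X$ is closed if $cl(X)=X$. *)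

(* Defs.v *)
From mathcomp Require Import all_boot.
Set Implicit Arguments. Unset Strict Implicit. Unset Printing Implicit Defensive.

Section SupportMatroid.
Variables (U : finType) (R : rel U).

Definition RN (x : U) : {set U} := [set y | R x y].

Definition Rstar (X : {set U}) : {set U} := [set x | RN x :&: X != set0].

Definition SR (X : {set U}) : bool := Rstar X == setT.

Definition indepR (I : {set U}) : bool :=
  [exists X : {set U}, minset SR X && (I \subset X)].

Definition rankR (X : {set U}) : nat :=
  \max_(I : {set U} | (I \subset X) && indepR I) #|I|.

Definition clR (X : {set U}) : {set U} :=
  [set e | rankR X == rankR (e |: X)].

Definition closedR (X : {set U}) : bool := clR X == X.

End SupportMatroid.

(* Main.v *)
Require Import Defs.
From mathcomp Require Import all_boot.
Set Implicit Arguments. Unset Strict Implicit. Unset Printing Implicit Defensive.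

Definition rep (U : finType) (R : rel U) (x : U) : U := odflt x [pick y | R x y].

Definition ptrans (U : finType) (R : rel U) (I : {set U}) :=
  forall x y, x \in I -> y \in I -> R x y -> x = y.

Lemma trans2 (U : finType) (R : rel U) (Rsym : symmetric R) (Rtrans : transitive R)
  x y z : R x y -> R x z -> R y z.
Proof. by move=> Hxy Hxz; apply: (Rtrans x); rewrite // Rsym. Qed.

Lemma rep_R (U : finType) (R : rel U) (Rrefl : reflexive R) x : R x (rep R x).
Proof. rewrite /rep; case: pickP => [y Hy|H] //=; by rewrite H in Rrefl. Qed.

Lemma rep_eq (U : finType) (R : rel U) (Rrefl : reflexive R) (Rsym : symmetric R) (Rtrans : transitive R)
  x y : R x y -> rep R x = rep R y.
Proof.
move=> Hxy; rewrite /rep (@eq_pick _ (fun z => R x z) (fun z => R y z)).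
  by case: pickP => [//|H]; have := H y; rewrite Rrefl.
move=> z; apply/idP/idP => H.
- exact: trans2 Hxy H.
- by apply: (Rtrans y).
Qed.

Lemma rep_eqR (U : finType) (R : rel U) (Rrefl : reflexive R) (Rsym : symmetric R)
  (Rtrans : transitive R) x y : rep R x = rep R y -> R x y.
Proof.
move=> E; have Hx := rep_R Rrefl x; have Hy := rep_R Rrefl y.
rewrite E in Hx; apply: (Rtrans (rep R y)) => //; by rewrite Rsym.
Qed.

Lemma SRP (U : finType) (R : rel U) (X : {set U}) :
  reflect (forall z, exists2 w, w \in X & R z w) (SR R X).
Proof.
apply: (iffP eqP) => [E z | H].
- have : z \in Rstar R X by rewrite E inE.
  rewrite inE => /set0Pn [w]; rewrite !inE => /andP [Rzw wX]; by exists w.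
- apply/setP => z; rewrite !inE; apply/set0Pn.
  case: (H z) => w wX Rzw; exists w; by rewrite !inE Rzw wX.
Qed.

Lemma ptrans_minset (U : finType) (R : rel U) (X : {set U}) :
  SR R X -> ptrans R X -> minset (SR R) X.
Proof.
move=> SX PX; apply/minsetP; split => // B /SRP SB sBX.
apply/eqP; rewrite eqEsubset sBX /=; apply/subsetP => y yX.
case: (SB y) => w wB Ryw.
by rewrite (PX y w yX (subsetP sBX _ wB) Ryw).
Qed.

Lemma indep_ptrans (U : finType) (R : rel U) (Rrefl : reflexive R) (Rsym : symmetric R)
  (Rtrans : transitive R) (I : {set U}) : indepR R I -> ptrans R I.
Proof.
move=> /existsP [X /andP [/minsetP [SX minX] sIX]] x y xI yI Rxy.
apply/eqP; apply/negPn/negP => nxy.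
have xX := subsetP sIX _ xI; have yX := subsetP sIX _ yI.
have SB : SR R (X :\ y).
  apply/SRP => z; have [w wX Rzw] := (elimT (SRP R X) SX) z.
  case: (eqVneq w y) => [Ewy | nwy].
  - exists x; first by rewrite !inE xX andbT.
    subst w; by apply: (Rtrans y z x Rzw); rewrite Rsym.
  - by exists w; rewrite // !inE nwy.
have := minX _ SB (subsetDl _ _) => E.
have : y \in X :\ y by rewrite E.
by rewrite !inE eqxx.
Qed.

Lemma ptrans_indep (U : finType) (R : rel U) (Rrefl : reflexive R) (Rsym : symmetric R)
  (Rtrans : transitive R) (I : {set U}) : ptrans R I -> indepR R I.
Proof.
move=> PI.
pose X := [set y | (y \in I) || (~~ [exists z in I, R y z] && (rep R y == y))].
apply/existsP; exists X; apply/andP; split; last first.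
  by apply/subsetP => y yI; rewrite inE yI.
apply: ptrans_minset.
- apply/SRP => z; case: (boolP [exists w in I, R z w]) => [/existsP [w /andP [wI Rzw]] | H].
  + by exists w; rewrite // inE wI.
  + exists (rep R z); last exact: rep_R.
    rewrite inE; apply/orP; right; apply/andP; split.
    * apply/negP => /existsP [w /andP [wI Rw]]; move/negP: H; apply.
      apply/existsP; exists w; rewrite wI /=.
      exact: (Rtrans (rep R z)) (rep_R Rrefl z) Rw.
    * by rewrite -(rep_eq Rrefl Rsym Rtrans (rep_R Rrefl z)).
- move=> x y; rewrite !inE => /orP [xI | /andP [nx /eqP rx]] /orP [yI | /andP [ny /eqP ry]] Rxy.
  + exact: PI.
  + by move/negP: ny; case; apply/existsP; exists x; rewrite xI Rsym.
  + by move/negP: nx; case; apply/existsP; exists y; rewrite yI.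
  + by rewrite -rx -ry (rep_eq Rrefl Rsym Rtrans Rxy).
Qed.

Lemma rank_rep (U : finType) (R : rel U) (Rrefl : reflexive R) (Rsym : symmetric R)
  (Rtrans : transitive R) (X : {set U}) : rankR R X = #|[set rep R x | x in X]|.
Proof.
apply/eqP; rewrite eqn_leq; apply/andP; split.
- apply/bigmax_leqP => I /andP [sIX /(indep_ptrans Rrefl Rsym Rtrans) PI].
  rewrite -(@card_in_imset _ _ (rep R) I); last first.
    by move=> a b aI bI E; apply: PI => //; exact: rep_eqR E.
  by apply: subset_leq_card; apply: imsetS.
- pose g x := odflt x [pick y in X | R x y].
  have gP x : x \in X -> (g x \in X) && R x (g x).
    move=> xX; rewrite /g; case: pickP => [y Hy | H] //=.
    by have := H x; rewrite xX Rrefl.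
  pose J := [set g x | x in X].
  have sJX : J \subset X.
    by apply/subsetP => _ /imsetP [x xX ->]; case/andP: (gP x xX).
  have PJ : ptrans R J.
    move=> _ _ /imsetP [x xX ->] /imsetP [x' x'X ->] R'.
    case/andP: (gP x xX) => _ Rx; case/andP: (gP x' x'X) => _ Rx'.
    have Rxx' : R x x'.
      apply: (Rtrans (g x)) => //; apply: (Rtrans (g x')); last by rewrite Rsym.
      exact: R'.
    rewrite /g (@eq_pick _ (fun y => (y \in X) && R x y) (fun y => (y \in X) && R x' y)).
      by case: pickP => [//|H]; have := H x'; rewrite x'X Rrefl.
    move=> z /=; congr andb; apply/idP/idP => H.
    + exact: trans2 Rxx' H.
    + by apply: (Rtrans x').
  apply: (@leq_trans #|J|); last first.
    by apply: (@leq_bigmax_cond _ _ (fun I : {set U} => #|I|) J); rewrite sJX /=; apply: ptrans_indep.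
  apply: leq_trans (leq_imset_card (rep R) J).
  apply: subset_leq_card; apply/subsetP => _ /imsetP [x xX ->].
  apply/imsetP; exists (g x); first by apply/imsetP; exists x.
  by apply: rep_eq => //; case/andP: (gP x xX).
Qed.

Theorem proposition9 (U : finType) (R : rel U)
  (U_nonempty : 0 < #|U|)
  (Rrefl : reflexive R) (Rsym : symmetric R) (Rtrans : transitive R) :
  forall X : {set U},
    closedR R X <-> \bigcup_(x in X) RN R x = X.
Proof.
move=> X; rewrite /closedR.
have -> : clR R X = \bigcup_(x in X) RN R x.
  apply/setP => e; rewrite inE !rank_rep // imsetU1 cardsU1.
  have -> : (#|[set rep R x | x in X]| == (rep R e \notin [set rep R x | x in X]) + #|[set rep R x | x in X]|)
           = (rep R e \in [set rep R x | x in X]).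
    by case: (rep R e \in _) => /=; rewrite ?add0n ?eqxx // -[X in X == _]add0n eqn_add2r.
  apply/imsetP/bigcupP => [[x xX E] | [x xX]].
  - by exists x => //; rewrite inE; apply: rep_eqR => //.
  - rewrite inE => Rxe; exists x => //; exact: (esym (rep_eq Rrefl Rsym Rtrans Rxe)).
by split => [/eqP | ->].
Qed.
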